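(* Let $\mathbb{F}$ be any field and let $n,d\ge 1$. For every $n^d\times n^d$ matrix $M$ over $\mathbb{F}$, \[ \mathcal{L}_{\mathsf{sm}}\big(\mathrm{ShiftedTensor}(M)\big)\;\ge\;\frac{\mathrm{PT\text{-}rank}(M)}{n^{\,d-\log_2 d+1}}. \] Equivalently, every syntactically set-multilinear arithmetic formula computing the set-multilinear polynomial \[ \widetilde Q_M=\sum_{\vec i,\vec j\in[n]^d} M_{\vec i,\vec j}\,\widetilde X^{(0)}_{i_1}\widetilde X^{(1)}_{j_1,i_2}\cdots\widetilde X^{(d-1)}_{j_{d-1},i_d}\widetilde X^{(d)}_{j_d} \] (with respect to the $d+1$ variable blocks $\widetilde X^{(0)},\dots,\widetilde X^{(d)}$) has at least $\mathrm{PT\text{-}rank}(M)/n^{d-\log_2 d+1}$ leaves.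
   Context: Rows and columns of an $n^d\times n^d$ matrix $M$ are indexed by $d$-tuples in $[n]^d$. For $k\in[d]$ the $k$-th partial transpose is $M^{\top_k}_{(i_1,\dots,i_d),(j_1,\dots,j_d)}=M_{(i_1,\dots,i_{k-1},j_k,i_{k+1},\dots,i_d),(j_1,\dots,j_{k-1},i_k,j_{k+1},\dots,j_d)}$; for $\kappa\subseteq[d]$, $M^{\top_\kappa}$ is the composition of the (commuting) $\top_k$, $k\in\kappa$. $M$ is PT-basic if $\mathrm{rank}(M^{\top_\kappa})=1$ for some $\kappa\subseteq[d]$; $\mathrm{PT\text{-}rank}(M)$ is the minimum number of PT-basic matrices summing to $M$. Pairing: $\langle i,j\rangle=(i-1)n+j$, a bijection $[n]^2\to[n^2]$. $\mathrm{ShiftedTensor}(M):[n^2]^{d+1}\to\mathbb{F}$ is defined by $\mathrm{ShiftedTensor}(M)(\langle p,i_1\rangle,\langle j_1,i_2\rangle,\dots,\langle j_{d-1},i_d\rangle,\langle j_d,q\rangle)=\mathbb 1\{p=q=1\}\,M_{(i_1,\dots,i_d),(j_1,\dots,j_d)}$. Set-multilinear formula size: for a nonempty finite set $D$ and a tensor $A:[N]^D\to\mathbb{F}$, $\mathcal L_{\mathsf{sm}}(A)$ is defined inductively: if $|D|=1$, it is $1$ if $A\neq 0$ and $0$ otherwise; if $|D|\ge 2$, it is the minimum of $\sum_i(\mathcal L_{\mathsf{sm}}(B_i)+\mathcal L_{\mathsf{sm}}(C_i))$ over finite families $(E_i,F_i,B_i,C_i)$ with $E_i,F_i$ disjoint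 nonempty, $E_i\cup F_i=D$, $B_i:[N]^{E_i}\to\mathbb{F}$, $C_i:[N]^{F_i}\to\mathbb{F}$ and $A=\sum_i B_i\otimes C_i$. This equals the minimum number of leaves of a syntactically set-multilinear formula computing $\sum_{a\in[N]^D}A(a)\prod_{k\in D}X^{(k)}_{a_k}$. Logarithms are base 2. *)

(* Defs.v *)
From HB Require Import structures.
From mathcomp Require Import all_boot all_order all_algebra.
From mathcomp Require Import boolp.
From Stdlib Require Rdefinitions Raxioms Rpower.

Set Implicit Arguments.
Unset Strict Implicit.
Unset Printing Implicit Defensive.

Import GRing.Theory.
Local Open Scope ring_scope.

(* A tensor on D subset of K with entries in [N] is represented as a   *)
(* function on full assignments K -> 'I_N that depends only on the     *)
(* coordinates in D.                                                   *)
Section SetMultilinear.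
Variables (F : fieldType) (K : finType) (N : nat).

Definition asg := {ffun K -> 'I_N}.

Definition dep_on (D : {set K}) (A : asg -> F) : Prop :=
  forall a b : asg, (forall k, k \in D -> a k = b k) -> A a = A b.

Inductive sm_cost : {set K} -> (asg -> F) -> nat -> Prop :=
| sm_leaf (D : {set K}) (A : asg -> F) :
    #|D| = 1%N -> dep_on D A ->
    sm_cost D A (if [exists a, A a != 0] then 1%N else 0%N)
| sm_split (D : {set K}) (A : asg -> F) (r : nat)
    (E G : 'I_r -> {set K}) (B C : 'I_r -> asg -> F) (sB sC : 'I_r -> nat) :
    (1 < #|D|)%N ->
    (forall i, [disjoint E i & G i] /\ E i != set0 /\ G i != set0
               /\ E i :|: G i = D) ->
    (forall i, sm_cost (E i) (B i) (sB i)) ->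
    (forall i, sm_cost (G i) (C i) (sC i)) ->
    (forall a, A a = \sum_(i < r) B i a * C i a) ->
    sm_cost D A (\sum_(i < r) (sB i + sC i))%N.

Lemma sm_cost_ex_bool (D : {set K}) (A : asg -> F) :
  (exists s, sm_cost D A s) -> exists s, `[< sm_cost D A s >].
Proof. by case=> s h; exists s; apply/asboolP. Qed.

(* The minimum cost (a decomposition always exists; the fallback 0 is
   never used, and would only strengthen a lower bound). *)
Definition L_sm (D : {set K}) (A : asg -> F) : nat :=
  match pselect (exists s, sm_cost D A s) with
  | left h => ex_minn (sm_cost_ex_bool h)
  | right _ => 0%N
  end.

End SetMultilinear.

Notation Idx n d := {ffun 'I_d -> 'I_n}.

Section PT.
Variables (F : fieldType) (n d : nat).

Notation mat := 'M[F]_#|Idx n d|.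

(* M^{T_kappa}_{a,b} = M_{a',b'} with a'_k = b_k, b'_k = a_k for k in
   kappa, and a'_k = a_k, b'_k = b_k otherwise (composition of the
   commuting single partial transposes T_k, k in kappa). *)
Definition ptrans (kappa : {set 'I_d}) (M : mat) : mat :=
  \matrix_(x, y)
    let a : Idx n d := enum_val x in let b : Idx n d := enum_val y in
    M (enum_rank [ffun k => if k \in kappa then b k else a k])
      (enum_rank [ffun k => if k \in kappa then a k else b k]).

Definition PT_basic (M : mat) : Prop :=
  exists kappa : {set 'I_d}, \rank (ptrans kappa M) = 1%N.

Definition PT_rank_le (M : mat) (r : nat) : Prop :=
  exists s : seq mat, size s = r /\ (forall B, B \in s -> PT_basic B)
                      /\ M = \sum_(B <- s) B.

Lemma ptrans0 (M : mat) : ptrans set0 M = M.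
Proof.
apply/matrixP=> x y; rewrite mxE /=.
rewrite (_ : finfun _ = enum_val x); last first.
  by apply/ffunP=> k; rewrite ffunE in_set0.
rewrite (_ : finfun _ = enum_val y); last first.
  by apply/ffunP=> k; rewrite ffunE in_set0.
by rewrite !enum_valK.
Qed.

Lemma PT_rank_ex (M : mat) : exists r, `[< PT_rank_le M r >].
Proof.
set P := [pred p : 'I_#|Idx n d| * 'I_#|Idx n d| | M p.1 p.2 != 0].
exists (size [seq M p.1 p.2 *: delta_mx p.1 p.2 | p <- enum P]).
apply/asboolP; eexists; split; first reflexivity; split.
  move=> B /mapP [p]; rewrite mem_enum inE => Mp ->.
  exists set0; rewrite ptrans0.
  by rewrite (eqmx_scale _ Mp) mxrank_delta.
rewrite big_map big_filter /= [LHS]matrix_sum_delta pair_bigA /=.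
rewrite [LHS](bigID P) /= [X in _ + X]big1 ?addr0 //=; last first.
  by move=> p /negPn /eqP ->; rewrite scale0r.
Qed.

Definition PT_rank (M : mat) : nat := ex_minn (PT_rank_ex M).

Lemma pair_ix_lt (x y : 'I_n) : (x * n + y < n * n)%N.
Proof.
have hx := ltn_ord x; have hy := ltn_ord y.
apply: (@leq_trans (x * n + n)%N); first by rewrite ltn_add2l.
by rewrite -mulSnr leq_mul2r hx orbT.
Qed.

(* 0-indexed version of <i,j> = (i-1) n + j *)
Definition pair_ix (x y : 'I_n) : 'I_(n * n) := Ordinal (pair_ix_lt x y).

(* the assignment (<p,i_1>, <j_1,i_2>, ..., <j_{d-1},i_d>, <j_d,q>) *)
Definition shifted_asg (p q : 'I_n) (i j : Idx n d) : {ffun 'I_d.+1 -> 'I_(n * n)} :=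
  [ffun t : 'I_d.+1 =>
     pair_ix
       (if val t == 0%N then p
        else if (insub (val t).-1 : option 'I_d) is Some k then j k else p)
       (if (insub (val t) : option 'I_d) is Some k then i k else q)].

Definition ShiftedTensor (M : mat) (a : {ffun 'I_d.+1 -> 'I_(n * n)}) : F :=
  if [pick x : 'I_n * 'I_n * Idx n d * Idx n d |
        a == shifted_asg x.1.1.1 x.1.1.2 x.1.2 x.2] is Some x
  then (if (val x.1.1.1 == 0%N) && (val x.1.1.2 == 0%N)
        then M (enum_rank x.1.2) (enum_rank x.2) else 0)
  else 0.

End PT.

Definition log2 (x : Rdefinitions.R) : Rdefinitions.R :=
  Rdefinitions.Rdiv (Rpower.ln x) (Rpower.ln (Raxioms.INR 2)).

Definition PT_bound (r n d : nat) : Rdefinitions.R :=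
  Rdefinitions.Rdiv (Raxioms.INR r)
    (Rpower.Rpower (Raxioms.INR n)
       (Rdefinitions.Rplus
          (Rdefinitions.Rminus (Raxioms.INR d) (log2 (Raxioms.INR d)))
          (Raxioms.INR 1))).

(* Main.v *)
Require Import Defs.
From Stdlib Require Import Reals Lra Lia.
Section RealPart.
Local Open Scope R_scope.
Lemma div_le_aux a b c : 0 < c -> a <= b * c -> a / c <= b.
Proof.
intros hc h. unfold Rdiv. apply Rmult_le_reg_r with c; auto.
rewrite Rmult_assoc, Rinv_l, Rmult_1_r by lra. lra.
Qed.

Lemma ln_le_aux x y : 0 < x -> x <= y -> ln x <= ln y.
Proof.
intros hx h. destruct (Rle_lt_or_eq_dec _ _ h) as [h'|h'].
- left. apply ln_increasing; assumption.
- rewrite h'. right. reflexivity.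
Qed.

Lemma real_part (r s e n d L : nat) : (0 < n)%nat -> (0 < d)%nat ->
  (r <= s * n ^ e)%nat -> e = (d - L)%nat -> (L <= d)%nat -> (d <= 2 ^ L)%nat ->
  Rge (INR s) (PT_bound r n d).
Proof.
intros hn hd hr he hL hdL.
unfold PT_bound, log2.
assert (n1 : 1 <= INR n) by (apply (le_INR 1); lia).
assert (n0 : 0 < INR n) by lra.
assert (d0 : 0 < INR d) by (apply lt_0_INR; lia).
assert (l2 : 0 < ln (INR 2)) by (rewrite <- ln_1; apply ln_increasing; simpl; lra).
assert (hX : INR e <= INR d - ln (INR d) / ln (INR 2) + INR 1).
{ rewrite he, minus_INR by lia.
  assert (ln (INR d) / ln (INR 2) <= INR L).
  { apply div_le_aux; [exact l2|].
    rewrite <- ln_pow by (simpl; lra).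
    apply ln_le_aux; [exact d0|].
    rewrite <- pow_INR. apply le_INR. exact hdL. }
  assert (INR 1 = 1) by reflexivity. lra. }
assert (hP : INR n ^ e <= Rpower (INR n) (INR d - ln (INR d) / ln (INR 2) + INR 1)).
{ rewrite <- Rpower_pow by exact n0. apply Rle_Rpower; assumption. }
assert (hP0 : 0 < Rpower (INR n) (INR d - ln (INR d) / ln (INR 2) + INR 1)) by (unfold Rpower; apply exp_pos).
apply Rle_ge. apply div_le_aux; [exact hP0|].
apply Rle_trans with (INR s * INR n ^ e).
- rewrite <- pow_INR, <- mult_INR. apply le_INR. exact hr.
- apply Rmult_le_compat_l; [apply pos_INR| exact hP].
Qed.
End RealPart.
From HB Require Import structures.
From mathcomp Require Import all_boot all_order all_algebra boolp.
From Stdlib Require Rdefinitions Raxioms Rpower.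
From mathcomp Require Import zify.
From Stdlib Require Import Lia.
Set Implicit Arguments. Unset Strict Implicit. Unset Printing Implicit Defensive.
Import GRing.Theory.
Fixpoint cutn (col : nat -> bool) (s : seq nat) : nat :=
  match s with
  | x :: ((y :: _) as s') => ((col x != col y) + cutn col s')%N
  | _ => 0%N
  end.

Lemma cutn2 col x y s : cutn col [:: x, y & s] = ((col x != col y) + cutn col (y :: s))%N.
Proof. by []. Qed.

Lemma cutn_eq col col' s : {in s, col =1 col'} -> cutn col s = cutn col' s.
Proof.
elim: s => [//|x [|y s] IH] h //.
rewrite !cutn2 !h ?inE ?eqxx ?orbT // IH // => z hz; apply: h; by rewrite inE hz orbT.
Qed.

Lemma cutn_cons col x s : (cutn col s <= cutn col (x :: s))%N.
Proof. by case: s => [|y s] //=; rewrite leq_addl. Qed.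

Lemma cut_exists s : exists col, ((size (undup s)).-1 <= cutn col s)%N.
Proof.
elim: s => [|x s [col IH]]; first by exists xpredT.
case: (boolP (x \in s)) => xs /=.
  rewrite xs; by exists col; apply: (leq_trans IH); apply: cutn_cons.
rewrite (negbTE xs) /=.
case: s xs IH => [|y s] xs IH; first by exists col.
exists (fun l => if l == x then ~~ col y else col l).
rewrite eqxx.
have yx : (y == x) = false by apply/negbTE; apply: contraNneq xs => ->; rewrite inE eqxx.
rewrite yx (cutn_eq (col' := col)); last first.
  move=> z hz; case: eqP => // ezx; by rewrite -ezx hz in xs.
have -> : (~~ col y != col y) = true by case: (col y).
by move: IH; case: (size _) => //= k IH.
Qed.

Lemma cutn_iota col h m k :
  cutn col [seq h i | i <- iota m k.+1] =
  count (fun i => col (h i) != col (h i.+1)) (iota m k).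
Proof.
elim: k m => [//|k IH] m.
rewrite [iota m k.+2]/= [iota m k.+1]/= !map_cons.
rewrite cutn2.
have := IH m.+1; rewrite [iota _ k.+1]/= map_cons => ->.
by [].
Qed.
Lemma card_iota d (P : pred nat) : #|[set k : 'I_d | P k]| = count P (iota 0 d).
Proof.
rewrite -sum1_card -sum1_count.
rewrite (eq_bigl (fun k : 'I_d => P k)); last by move=> k; rewrite inE.
by rewrite -(big_mkord P (fun _ => 1)) /index_iota subn0.
Qed.
Local Open Scope ring_scope.
Section Gen.
Variables (F : fieldType) (K : finType) (N : nat).
Local Notation asgT := (asg K N).

Lemma sm_dep (D : {set K}) (A : asgT -> F) s : sm_cost D A s -> dep_on D A.
Proof.
elim=> {D A s} [D A _ hA //|D A r E G B C sB sC _ hEG _ IHB _ IHC hA].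
move=> a b hab; rewrite !hA; apply: eq_bigr => i _.
have [_ [_ [_ hU]]] := hEG i.
rewrite (IHB i a b) ?(IHC i a b) // => k hk; apply: hab; rewrite -hU inE hk ?orbT //.
Qed.

Definition upd (a : asgT) (b : K) (v : 'I_N) : asgT :=
  [ffun k => if k == b then v else a k].

Lemma sm_exists (D : {set K}) (A : asgT -> F) :
  D != set0 -> dep_on D A -> exists s, sm_cost D A s.
Proof.
move: {2}#|D| (leqnn #|D|) => m; elim: m D A => [|m IH] D A.
  by rewrite leqn0 cards_eq0 => /eqP ->; rewrite eqxx.
move=> hm hD hA; have [b bD] := set0Pn _ hD.
case: (ltnP 1 #|D|) => h1; last first.
  have h1' : #|D| = 1%N.
    by apply/eqP; rewrite eqn_leq h1 card_gt0 hD.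
  by eexists; apply: sm_leaf.
have hG : D :\ b != set0.
  by rewrite -card_gt0; move: h1; rewrite (cardsD1 b D) bD.
have hC : forall v : 'I_N, dep_on (D :\ b) (fun a => A (upd a b v)).
  move=> v a a' haa; apply: hA => k kD; rewrite !ffunE.
  case: eqP => // /eqP kb; apply: haa; by rewrite !inE kb.
have hsz : (#|D :\ b| <= m)%N.
  by move: hm; rewrite (cardsD1 b D) bD.
pose sC (v : 'I_N) := proj1_sig (cid (IH _ _ hsz hG (hC v))).
have sCP : forall v, sm_cost (D :\ b) (fun a => A (upd a b v)) (sC v).
  by move=> v; rewrite /sC; case: cid.
eexists; apply: (@sm_split F K N D A N (fun _ => [set b]) (fun _ => D :\ b)
   (fun v a => if a b == v then 1 else 0) (fun v a => A (upd a b v)) _ sC h1).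
- move=> i; split; first by rewrite disjoints1 !inE eqxx.
  split; first by apply/set0Pn; exists b; rewrite inE.
  by split=> //; exact: setD1K.
- move=> i; apply: sm_leaf; first by rewrite cards1.
  by move=> a a' h; rewrite h // inE.
- exact: sCP.
- move=> a; rewrite (bigD1 (a b)) //= eqxx mul1r big1 ?addr0.
    by apply: hA => k _; rewrite ffunE; case: eqP => // ->.
  by move=> v /negPf; rewrite eq_sym => ->; rewrite mul0r.
Qed.

Definition good (D : {set K}) (t : nat) (lab : K -> nat) (g : nat -> asgT -> F) :=
  [/\ (#|D| <= 2 ^ t.-1)%N, (forall b, b \in D -> lab b < t)%N,
      (forall l, l < t -> exists2 b, b \in D & lab b = l)%N &
      (forall l, l < t -> dep_on [set b in D | lab b == l] (g l))%N].

Inductive SG (D : {set K}) : (asgT -> F) -> nat -> Prop :=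
| SG0 : SG D (fun _ => 0) 0
| SGt t lab g : good D t lab g -> SG D (fun a => \prod_(l < t) g l a) 1
| SGadd A B s1 s2 : SG D A s1 -> SG D B s2 -> SG D (fun a => A a + B a) (s1 + s2)
| SGext A B s s' : (forall a, A a = B a) -> (s <= s')%N -> SG D A s -> SG D B s'.

Lemma SG_sum D (I : Type) (l : seq I) (A : I -> asgT -> F) (s : I -> nat) :
  (forall i, SG D (A i) (s i)) ->
  SG D (fun a => \sum_(i <- l) A i a) (\sum_(i <- l) s i)%N.
Proof.
move=> h; elim: l => [|x l IH].
  by apply: (SGext _ _ (SG0 D)) => [a|]; rewrite ?big_nil.
apply: (SGext _ _ (SGadd (h x) IH)) => [a|]; by rewrite big_cons.
Qed.

Lemma SG_mul D E G B C s : SG E B s -> dep_on G C -> [disjoint E & G] ->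
  E :|: G = D -> (#|D| <= 2 * #|E|)%N -> E != set0 -> G != set0 ->
  SG D (fun a => B a * C a) s.
Proof.
move=> hB hC hdis hU hsz hE hG; elim: hB hsz hE => {B s}.
- move=> _ _; apply: (SGext _ _ (SG0 D)) => // a; by rewrite mul0r.
- move=> t lab g [h1 h2 h3 h4] hsz hE.
  have t0 : (0 < t)%N.
    by case/set0Pn: hE => b /h2; case: t {h1 h2 h3 h4}.
  pose lab' b := if b \in G then t else lab b.
  pose g' l := if l == t then C else g l.
  apply: (SGext _ _ (@SGt D t.+1 lab' g' _)) => //.
    move=> a; rewrite big_ord_recr /= /g' eqxx; congr (_ * _).
    by apply: eq_bigr => i _; rewrite ifN // neq_ltn ltn_ord.
  have hEG : forall b, b \in E -> b \notin G.
    by move=> b bE; rewrite (disjointFr hdis bE).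
  split.
  + rewrite /= (leq_trans hsz) //.
    by move: h1; rewrite -{2}(prednK t0) expnS leq_mul2l.
  + move=> b; rewrite -hU inE /lab'; case: ifP => // _; rewrite orbF => /h2.
    exact: ltnW.
  + move=> l; rewrite ltnS leq_eqVlt => /orP [/eqP ->|/h3 [b bE <-]].
      case/set0Pn: hG => b bG.
      by exists b; rewrite ?(hU) /lab' ?bG // -hU inE bG orbT.
    by exists b; rewrite /lab' ?(negPf (hEG _ bE)) // -hU inE bE.
  + move=> l; rewrite ltnS leq_eqVlt => /orP [/eqP ->|hl].
      rewrite /g' eqxx => a a' h; apply: hC => b bG; apply: h.
      by rewrite inE /lab' bG eqxx -hU inE bG orbT.
    rewrite /g' ifN ?neq_ltn ?hl // => a a' h; apply: (h4 _ hl) => b.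
    rewrite inE => /andP [bE /eqP lb]; apply: h.
    by rewrite inE /lab' (negPf (hEG _ bE)) lb eqxx -hU inE bE.
- move=> A1 A2 s1 s2 _ IH1 _ IH2 hsz hE.
  apply: (SGext _ _ (SGadd (IH1 hsz hE) (IH2 hsz hE))) => // a; by rewrite mulrDl.
- move=> A1 A2 s1 s2 hA hs _ IH hsz hE.
  apply: (SGext _ _ (IH hsz hE)) => // a; by rewrite hA.
Qed.


Lemma sm_SG D A s : sm_cost D A s -> SG D A s.
Proof.
elim=> {D A s} [D A h1 hA|D A r E G B C sB sC _ hEG hBc IHB hCc IHC hA].
  case: existsP => [_|hn].
    have [b bD] : exists2 b, b \in D & True.
      have /set0Pn [b bD] : D != set0 by rewrite -card_gt0 h1.
      by exists b.
    move=> _; apply: (SGext _ _ (@SGt D 1 (fun _ => 0%N) (fun _ => A) _)) => //.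
      by move=> a; rewrite big_ord1.
    split.
    - by rewrite h1.
    - by [].
    - by case=> // _; exists b.
    case=> // _ a a' h; apply: hA => k kD; apply: h; by rewrite inE kD /=.
  apply: (SGext _ _ (SG0 D)) => // a.
  by apply/eqP; rewrite eq_sym; apply/negPn/negP => h; apply: hn; exists a.
suff hs : forall i, SG D (fun a => B i a * C i a) (sB i + sC i)%N.
  apply: (SGext _ _ (SG_sum (index_enum 'I_r) hs)) => // a.
move=> i; have [hdis [hE [hG hU]]] := hEG i.
have hcard : #|D| = (#|E i| + #|G i|)%N.
  by rewrite -hU cardsU (disjoint_setI0 hdis) cards0 subn0.
case: (leqP #|G i| #|E i|) => hle.
  apply: (SGext _ _ (SG_mul (IHB i) (sm_dep (hCc i)) hdis hU _ hE hG)) => //.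
  - by rewrite leq_addr.
  - by rewrite hcard mul2n -addnn leq_add2l.
apply: (SGext _ _ (SG_mul (IHC i) (sm_dep (hBc i)) _ _ _ hG hE)).
- by move=> a; rewrite mulrC.
- by rewrite leq_addl.
- by rewrite disjoint_sym.
- by rewrite setUC.
- by rewrite hcard mul2n -addnn leq_add2r ltnW.
Qed.

End Gen.
Section PTpart.
Variables (F : fieldType) (n d : nat).
Local Notation mat := 'M[F]_#|Idx n d|.

Definition PTle1 (B : mat) := exists kappa : {set 'I_d}, (\rank (ptrans kappa B) <= 1)%N.
Definition PTs (B : mat) (r : nat) := exists s : seq mat,
  [/\ (size s <= r)%N, (forall X, X \in s -> PTle1 X) & B = \sum_(X <- s) X].

Lemma ptrans_eq0 kappa (B : mat) : ptrans kappa B = 0 -> B = 0.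
Proof.
move=> h; apply/matrixP => x y; rewrite mxE.
pose a : Idx n d := enum_val x; pose b : Idx n d := enum_val y.
pose a0 : Idx n d := [ffun k => if k \in kappa then b k else a k].
pose b0 : Idx n d := [ffun k => if k \in kappa then a k else b k].
have := congr1 (fun M : mat => M (enum_rank a0) (enum_rank b0)) h.
rewrite /= !mxE !enum_rankK; cbv zeta.
have -> : [ffun k => if k \in kappa then b0 k else a0 k] = a.
  by apply/ffunP => k; rewrite /a0 /b0 !ffunE; case: (k \in kappa).
have -> : [ffun k => if k \in kappa then a0 k else b0 k] = b.
  by apply/ffunP => k; rewrite /a0 /b0 !ffunE; case: (k \in kappa).
by rewrite /a /b !enum_valK.
Qed.

Lemma PTs_rank (B : mat) r : PTs B r -> (PT_rank B <= r)%N.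
Proof.
case=> s [hs hX hB].
pose s' := [seq X <- s | X != 0].
have hle : PT_rank_le B (size s').
  exists s'; split => //; split.
    move=> X; rewrite mem_filter => /andP [nz Xs].
    have [kappa hk] := hX X Xs; exists kappa; apply/eqP; rewrite eqn_leq hk /=.
    rewrite lt0n mxrank_eq0; by apply: contra nz => /eqP /ptrans_eq0 /eqP.
  rewrite hB big_filter [LHS](bigID (fun X => X != 0)) /=.
  by rewrite [X in _ + X]big1 ?addr0 // => X /negPn /eqP.
rewrite /PT_rank; case: ex_minnP => m _ hm.
apply: (leq_trans (hm (size s') _)); first by apply/asboolP.
by apply: leq_trans hs; rewrite size_filter count_size.
Qed.

Lemma PTs0 : PTs 0 0.
Proof. by exists [::]; split => //; rewrite big_nil. Qed.

Lemma PTs_add (A B : mat) r1 r2 : PTs A r1 -> PTs B r2 -> PTs (A + B) (r1 + r2).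
Proof.
case=> s1 [h1 h1' ->] [s2 [h2 h2' ->]]; exists (s1 ++ s2); split.
- by rewrite size_cat leq_add.
- by move=> X; rewrite mem_cat => /orP [/h1'|/h2'].
- by rewrite big_cat.
Qed.

Lemma PTs_le (A B : mat) r r' : A = B -> (r <= r')%N -> PTs A r -> PTs B r'.
Proof.
move=> <- hr [s [h1 h2 h3]]; exists s; split => //; exact: leq_trans hr.
Qed.

Lemma rank1_of (B : mat) (u v : Idx n d -> F) :
  (forall x y, B x y = u (enum_val x) * v (enum_val y)) -> (\rank B <= 1)%N.
Proof.
move=> h.
have -> : B = (\col_x u (enum_val x)) *m (\row_y v (enum_val y)).
  apply/matrixP => x y; rewrite !mxE big_ord1 !mxE; exact: h.
exact: leq_trans (mxrankM_maxl _ _) (rank_leq_col _).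
Qed.

Lemma pair_ix_div (hn : (0 < n)%N) (x y : 'I_n) : (val (pair_ix x y) %/ n = x)%N.
Proof. by rewrite /= divnMDl // divn_small // addn0. Qed.

Lemma pair_ix_mod (x y : 'I_n) : (val (pair_ix x y) %% n = y)%N.
Proof. by rewrite /= modnMDl modn_small. Qed.

Lemma sa_congr p q (i j i' j' : Idx n d) t :
  (forall k : 'I_d, lift ord0 k = t -> j k = j' k) ->
  (forall k : 'I_d, widen_ord (leqnSn d) k = t -> i k = i' k) ->
  shifted_asg p q i j t = shifted_asg p q i' j' t.
Proof.
move=> h1 h2; rewrite !ffunE; congr pair_ix.
  case: eqP => // t0; case: insubP => // k _ hk; apply: h1; apply: val_inj.
  by rewrite /= /bump leq0n add1n hk prednK // lt0n; apply/eqP.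
case: insubP => // k _ hk; apply: h2; exact: val_inj.
Qed.

Lemma sa_j (hn : (0 < n)%N) p q (i j : Idx n d) (k : 'I_d) :
  (val (shifted_asg p q i j (lift ord0 k)) %/ n = j k)%N.
Proof.
rewrite ffunE pair_ix_div //= add0n.
by rewrite (insubT (fun m => m < d)%N (ltn_ord k)); congr (j _); apply: val_inj.
Qed.

Lemma sa_i p q (i j : Idx n d) (k : 'I_d) :
  (val (shifted_asg p q i j (widen_ord (leqnSn d) k)) %% n = i k)%N.
Proof.
rewrite ffunE pair_ix_mod /=.
by rewrite (insubT (fun m => m < d)%N (ltn_ord k)); congr (i _); apply: val_inj.
Qed.

Lemma sa_p (hn : (0 < n)%N) p q (i j : Idx n d) :
  (val (shifted_asg p q i j ord0) %/ n = p)%N.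
Proof. by rewrite ffunE pair_ix_div. Qed.

Lemma sa_q p q (i j : Idx n d) :
  (val (shifted_asg p q i j ord_max) %% n = q)%N.
Proof. by rewrite ffunE pair_ix_mod /= insubF // ltnn. Qed.

Lemma sa_inj (hn : (0 < n)%N) p q p' q' (i j i' j' : Idx n d) :
  shifted_asg p q i j = shifted_asg p' q' i' j' ->
  [/\ p = p', q = q', i = i' & j = j'].
Proof.
move=> h; split.
- apply: val_inj; have := congr1 (fun a : {ffun 'I_d.+1 -> 'I_(n * n)} => val (a ord0) %/ n)%N h.
  by rewrite /= !sa_p.
- apply: val_inj; have := congr1 (fun a : {ffun 'I_d.+1 -> 'I_(n * n)} => val (a ord_max) %% n)%N h.
  by rewrite /= !sa_q.
- apply/ffunP => k; apply: val_inj.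
  have := congr1 (fun a : {ffun 'I_d.+1 -> 'I_(n * n)} => val (a (widen_ord (leqnSn d) k)) %% n)%N h.
  by rewrite /= !sa_i.
- apply/ffunP => k; apply: val_inj.
  have := congr1 (fun a : {ffun 'I_d.+1 -> 'I_(n * n)} => val (a (lift ord0 k)) %/ n)%N h.
  by rewrite /= !sa_j.
Qed.

Lemma ST_sa (hn : (0 < n)%N) (M : 'M[F]_#|Idx n d|) (i j : Idx n d) :
  ShiftedTensor M (shifted_asg (Ordinal hn) (Ordinal hn) i j) = M (enum_rank i) (enum_rank j).
Proof.
rewrite /ShiftedTensor; case: pickP => [[[[p q] i'] j'] /eqP /= h|hnone].
  by case: (sa_inj hn h) => <- <- <- <-; rewrite eqxx.
by have := hnone (Ordinal hn, Ordinal hn, i, j); rewrite /= eqxx.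
Qed.


Variable (hn : (0 < n)%N).
Local Notation z := (Ordinal hn).
Local Notation asgT := (asg 'I_d.+1 (n * n)).
Definition sa (i j : Idx n d) : asgT := shifted_asg z z i j.
Definition matf (f : asgT -> F) : mat :=
  \matrix_(x, y) f (sa (enum_val x) (enum_val y)).
Local Notation wdn k := (widen_ord (leqnSn d) k).
Local Notation lft k := (lift ord0 k).

Lemma Lprime (S : {set 'I_d.+1}) (U V : asgT -> F) :
  dep_on S U -> dep_on (~: S) V ->
  PTs (matf (fun a => U a * V a))
      (n ^ #|[set k : 'I_d | (wdn k \in S) == (lft k \in S)]|).
Proof.
move=> hU hV.
set W := [set k : 'I_d | _].
pose kap := [set k : 'I_d | lft k \in S].
pose rep (al i : Idx n d) : Idx n d := [ffun k => if k \in W then al k else i k].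
pose indL (al a : Idx n d) : F := \prod_(k in W | k \notin kap) ((a k == al k)%:R).
pose indR (al b : Idx n d) : F := \prod_(k in W | k \in kap) ((b k == al k)%:R).
pose Ma (al : Idx n d) : mat := \matrix_(x, y)
    ((\prod_(k in W) (((enum_val x : Idx n d) k == al k)%:R)) *
     (U (sa (rep al (enum_val x)) (enum_val y)) * V (sa (rep al (enum_val x)) (enum_val y)))).
pose Phi := pffun_on z W predT.
exists [seq Ma al | al <- enum Phi]; split.
- by rewrite size_map -cardE card_pffun_on cardT size_enum_ord.
- move=> X /mapP [al _ ->]; exists kap.
  apply: (@rank1_of _ (fun a => indL al a * U (sa (rep al a) a))
                          (fun b => indR al b * V (sa (rep al b) b))) => x y.
  rewrite mxE; cbv zeta; rewrite /Ma mxE !enum_rankK.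
  set a := enum_val x; set b := enum_val y.
  set a' := [ffun k => if k \in kap then b k else a k].
  set b' := [ffun k => if k \in kap then a k else b k].
  have -> : \prod_(k in W) ((a' k == al k)%:R : F) = indL al a * indR al b.
    rewrite (bigID (fun k => k \in kap)) /= mulrC; congr (_ * _).
      by apply: eq_bigr => k /andP [_ /negPf hk]; rewrite /a' ffunE hk.
    by apply: eq_bigr => k /andP [_ hk]; rewrite /a' ffunE hk.
  have -> : U (sa (rep al a') b') = U (sa (rep al a) a).
    apply: hU => t tS; apply: sa_congr => k hk.
      by rewrite /b' ffunE inE hk tS.
    rewrite /rep !ffunE; case: ifP => // kW.
    rewrite inE; case: ifP => // lS.
    by move: kW; rewrite inE hk tS lS.
  have -> : V (sa (rep al a') b') = V (sa (rep al b) b).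
    apply: hV => t; rewrite inE => /negPf tS; apply: sa_congr => k hk.
      by rewrite /b' ffunE inE hk tS.
    rewrite /rep !ffunE; case: ifP => // kW.
    rewrite inE; case: ifP => // lS.
    by move: kW; rewrite inE hk tS lS.
  by rewrite mulrACA.
- rewrite big_map big_enum /=; apply/matrixP => x y; rewrite summxE !mxE.
  set i := enum_val x; set j := enum_val y.
  pose al0 : Idx n d := [ffun k => if k \in W then i k else z].
  have al0P : al0 \in Phi.
    apply/pffun_onP; split => //; apply/supportP => k kW.
    by rewrite ffunE (negPf kW).
  rewrite (bigD1 al0) //= big1 ?addr0.
    rewrite /Ma mxE -/i -/j big1 ?mul1r; last by move=> k kW; rewrite ffunE kW eqxx.
    congr (U (sa _ _) * V (sa _ _)); apply/ffunP => k; rewrite !ffunE;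
      by case: ifP => // ->.
  move=> al /andP [alP neq].
  have [k kW nk] : exists2 k, k \in W & i k != al k.
    apply/exists_inP; apply: contraR neq => /exists_inPn h.
    apply/eqP/ffunP => k; rewrite ffunE; case: ifP => kW.
      by have := h k kW; rewrite negbK => /eqP.
    by move/pffun_onP: alP => [/supportP hs _]; rewrite hs // kW.
  rewrite /Ma mxE (bigD1 k) //= (negPf nk) mul0r.
  by rewrite mul0r.
Qed.

End PTpart.

Section Final.
Variables (F : fieldType) (n d : nat) (hn : (0 < n)%N).
Local Notation asgT := (asg 'I_d.+1 (n * n)).

Lemma matf_ext (A B : asgT -> F) : (forall a, A a = B a) -> matf hn A = matf hn B.
Proof. by move=> h; apply/matrixP => x y; rewrite !mxE h. Qed.

Lemma SG_PTs e : (forall t, (d.+1 <= 2 ^ t.-1)%N -> (d - t.-1 <= e)%N) ->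
  forall (A : asgT -> F) s, SG [set: 'I_d.+1] A s -> PTs (matf hn A) (s * n ^ e).
Proof.
move=> he A s; elim => {A s}.
- apply: (PTs_le _ _ (PTs0 F n d)) => //.
  by apply/matrixP => x y; rewrite !mxE.
- move=> t lab g [h1 h2 h3 h4].
  pose h := fun b : nat => lab (inord b : 'I_d.+1).
  pose s0 := [seq h b | b <- iota 0 d.+1].
  have hsz : size (undup s0) = t.
    rewrite -(size_iota 0 t); apply: perm_size.
    apply: uniq_perm; [exact: undup_uniq | exact: iota_uniq |] => x.
    rewrite mem_undup mem_iota add0n /=; apply/mapP/idP.
      by case=> b _ ->; apply: h2; rewrite inE.
    move/h3 => [b _ <-]; exists (val b); first by rewrite mem_iota /= ltn_ord.
    by rewrite /h inord_val.
  have [col hc] := cut_exists s0.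
  rewrite hsz /s0 cutn_iota in hc.
  pose S := [set b : 'I_d.+1 | ~~ col (lab b)].
  pose U a := \prod_(l < t | ~~ col l) g l a.
  pose V a := \prod_(l < t | col l) g l a.
  have hUV : forall a, U a * V a = \prod_(l < t) g l a.
    by move=> a; rewrite mulrC [RHS](bigID (fun l : 'I_t => col l)).
  have hU : dep_on S U.
    move=> a a' haa; apply: eq_bigr => l hl; apply: (h4 _ (ltn_ord l)) => b.
    by rewrite !inE => /eqP hb; apply: haa; rewrite inE hb.
  have hV : dep_on (~: S) V.
    move=> a a' haa; apply: eq_bigr => l hl; apply: (h4 _ (ltn_ord l)) => b.
    by rewrite !inE => /eqP hb; apply: haa; rewrite !inE hb hl.
  apply: (PTs_le _ _ (Lprime hn hU hV)); first exact: matf_ext.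
  rewrite mul1n; apply: leq_pexp2l => //.
  set W := [set k : 'I_d | _].
  have -> : #|W| = count (fun i => col (h i) == col (h i.+1)) (iota 0 d).
    rewrite -card_iota; apply: eq_card => k; rewrite !inE /h.
    have -> : (inord k : 'I_d.+1) = widen_ord (leqnSn d) k.
      by apply: val_inj; rewrite /= inordK // ltnW // ltnS ltn_ord.
    have -> : (inord k.+1 : 'I_d.+1) = lift ord0 k.
      by apply: val_inj; rewrite /= inordK // ltnS ltn_ord.
    by case: (col _); case: (col _).
  have hd := count_predC (fun i => col (h i) == col (h i.+1)) (iota 0 d).
  rewrite size_iota in hd.
  apply: leq_trans (he t _).
    move: hd hc; set c1 := count _ (iota 0 d); set c2 := count _ (iota 0 d); lia.
  by move: h1; rewrite cardsT card_ord.
- move=> A1 A2 s1 s2 _ IH1 _ IH2.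
  apply: (PTs_le _ _ (PTs_add IH1 IH2)); last by rewrite mulnDl.
  by apply/matrixP => x y; rewrite !mxE.
- move=> A1 A2 s1 s2 hA hs _ IH.
  apply: (PTs_le _ _ IH); first exact: matf_ext.
  by rewrite leq_mul2r hs orbT.
Qed.

End Final.

Lemma expn_pow m k : expn m k = Nat.pow m k.
Proof. by elim: k => //= k IH; rewrite expnS IH mulnE. Qed.

Theorem theorem1p4 (F : fieldType) (n d : nat) (hn : (0 < n)%N) (hd : (0 < d)%N)
  (M : 'M[F]_#|Idx n d|) :
  Rdefinitions.Rge
    (Raxioms.INR (L_sm [set: 'I_d.+1] (ShiftedTensor M)))
    (PT_bound (PT_rank M) n d).
Proof.
set A := ShiftedTensor M.
have hdep : dep_on [set: 'I_d.+1] A.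
  by move=> a b h; congr A; apply/ffunP => k; apply: h; rewrite inE.
have hex : exists s, sm_cost [set: 'I_d.+1] A s.
  by apply: sm_exists => //; apply/set0Pn; exists ord0; rewrite inE.
rewrite /L_sm; case: pselect => [h|/(_ hex)//].
case: ex_minnP => s hs _.
move/asboolP: hs => hs.
pose L := up_log 2 d.+1.
have hLd : (L <= d)%N by apply: up_log_min => //; exact: ltn_expl.
have hdL : (d.+1 <= 2 ^ L)%N by apply: up_logP.
pose e := (d - L)%N.
have he : forall t, (d.+1 <= 2 ^ t.-1)%N -> (d - t.-1 <= e)%N.
  by move=> t ht; apply: leq_sub2l; apply: up_log_min.
have hPT := SG_PTs hn he (sm_SG hs).
have hM : matf hn A = M.
  by apply/matrixP => x y; rewrite mxE /sa /A ST_sa !enum_valK.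
rewrite hM in hPT; have hr := PTs_rank hPT.
apply: (@real_part _ _ e _ _ L).
- by apply/leP.
- by apply/leP.
- rewrite -expn_pow -mulnE; exact/leP.
- by rewrite /e; lia.
- exact/leP.
- rewrite -expn_pow; apply/leP; exact: ltnW.
Qed.
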